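(* For $a\in\mathbb{R}$ let $(g_1,g_3)$ be the maximal solution of \[ \dot g_1=\frac{a^2+g_3^2}{g_1g_3},\qquad \dot g_3=\frac{a^2-g_3^2}{g_1^2},\qquad g_1(0)=g_3(0)=1 \] (the reduced left-invariant generalized Ricci flow on the Heisenberg group $H_3$ starting from the standard metric and $H_0=a\,e^{123}$). Its maximal interval of existence is of the form $(T_{\min}(a),\infty)$ with $T_{\min}(a)<0$, where $T_{\min}$ is an even function of $a$ with $T_{\min}(0)=-\tfrac13$, and \[ \lim_{t\to T_{\min}(a)^+}g_1(t)=0,\qquad \lim_{t\to T_{\min}(a)^+}g_3(t)=\begin{cases}\infty,&|a|<1,\\ 1,&a=\pm1,\\ 0,&|a|>1.\end{cases} \]
   Context: The system arises from the gauge-fixed generalized Ricci flow $\dot g=-2\mathrm{Rc}_g+\tfrac12H\circ_gH$, $\dot H=-\Delta_gH$ on left-invariant data on the Heisenberg group, with metric $g(t)=g_1(t)(e^1\otimes e^1+e^2\otimes e^2)+g_3(t)e^3\otimes e^3$, $[e_1,e_2]=e_3$, and $H(t)\equiv a\,e^{123}$. *)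

(* Defs.v *)
From Stdlib Require Import Reals Lra.
Open Scope R_scope.

(* (g1,g3) solves the reduced generalized Ricci flow ODE with parameter a
   on the set I (intended: an open interval containing 0), with positive
   components (positive-definite metric), and g1(0)=g3(0)=1. *)
Definition sol_on (a : R) (I : R -> Prop) (g1 g3 : R -> R) : Prop :=
  g1 0 = 1 /\ g3 0 = 1 /\
  forall t, I t ->
    0 < g1 t /\ 0 < g3 t /\
    derivable_pt_lim g1 t ((a ^ 2 + g3 t ^ 2) / (g1 t * g3 t)) /\
    derivable_pt_lim g3 t ((a ^ 2 - g3 t ^ 2) / (g1 t ^ 2)).

Definition right_lim (f : R -> R) (T l : R) : Prop :=
  forall eps, 0 < eps -> exists delta, 0 < delta /\
    forall t, T < t < T + delta -> Rabs (f t - l) < eps.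

Definition right_lim_infty (f : R -> R) (T : R) : Prop :=
  forall M, exists delta, 0 < delta /\
    forall t, T < t < T + delta -> M < f t.

(* Main.v *)
Require Import Defs.
From Stdlib Require Import Reals Lra Psatz ClassicalEpsilon Ranalysis5.
From Coquelicot Require Import Coquelicot.
Open Scope R_scope.

Definition fb (b u : R) : R := u^2 / (1 - b*u^2)^3.
Definition Fb (b v : R) : R := RInt (fb b) 0 v.

Lemma ball_lemma (b v : R) : 0 <= b -> b*v^2 < 1 ->
  exists r, 0 < r /\ forall y, Rabs (y - v) < r -> forall z, Rabs z <= Rabs y -> b*z^2 < 1.
Proof.
  intros Hb Hv.
  set (r := Rmin 1 ((1 - b*v^2)/(b*(2*Rabs v+1)+1))).
  assert (Hq : 0 < (1 - b*v^2)/(b*(2*Rabs v+1)+1)).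
  { apply Rdiv_lt_0_compat. lra. assert (0<=Rabs v) by apply Rabs_pos. nra. }
  exists r. split. unfold r; apply Rmin_glb_lt; lra.
  intros y Hy z Hz.
  assert (r1 : r <= 1) by apply Rmin_l.
  assert (r2 : r <= (1 - b*v^2)/(b*(2*Rabs v+1)+1)) by apply Rmin_r.
  assert (Hv0 : 0 <= Rabs v) by apply Rabs_pos.
  assert (r3 : r * (b*(2*Rabs v+1)+1) <= 1 - b*v^2).
  { apply (Rmult_le_compat_r (b*(2*Rabs v+1)+1)) in r2; [|nra].
    unfold Rdiv in r2. rewrite Rmult_assoc, Rinv_l in r2; nra. }
  assert (Hyv : Rabs y <= Rabs v + r).
  { pose proof (Rabs_triang (y - v) v). replace (y - v + v) with y in H by ring. lra. }
  assert (Hz0 : 0 <= Rabs z) by apply Rabs_pos.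
  assert (z^2 = Rabs z ^2) by (rewrite <- Rsqr_pow2; rewrite Rsqr_abs; unfold Rsqr; ring).
  assert (v^2 = Rabs v ^2) by (rewrite <- Rsqr_pow2; rewrite Rsqr_abs; unfold Rsqr; ring).
  assert (0 < r) by (unfold r; apply Rmin_glb_lt; lra).
  assert (Rabs z ^2 <= (Rabs v + r)^2) by nra.
  assert (b*(r*r) <= b*r) by (apply Rmult_le_compat_l; nra).
  assert (b * (Rabs v + r)^2 <= b*v^2 + b*r*(2*Rabs v+1)).
  { replace (b * (Rabs v + r)^2) with (b*Rabs v^2 + 2*b*r*Rabs v + b*(r*r)) by ring. nra. }
  nra.
Qed.

Lemma fb_cont (b z : R) : b*z^2 < 1 -> continuous (fb b) z.
Proof.
  intros H. apply (ex_derive_continuous (fb b)). unfold fb.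
  auto_derive. assert (0 < 1 + - (b * (z * (z * 1)))) by nra. apply Rgt_not_eq. repeat apply Rmult_lt_0_compat; lra.
Qed.

Lemma Fb_deriv (b v : R) : 0 <= b -> b*v^2 < 1 ->
  derivable_pt_lim (Fb b) v (fb b v).
Proof.
  intros Hb Hv. apply is_derive_Reals. unfold Fb.
  apply is_derive_RInt with 0.
  2: now apply fb_cont.
  destruct (ball_lemma b v Hb Hv) as [r [Hr Hball]].
  exists (mkposreal r Hr). intros y Hy. apply (RInt_correct (fb b)).
  apply (ex_RInt_continuous (fb b)). intros z Hz. apply fb_cont.
  apply (Hball y).
  - change (Rabs (y - v) < r). exact Hy.
  - destruct Hz as [Hz1 Hz2]. unfold Rmin, Rmax in *.
    destruct (Rle_dec 0 y); unfold Rabs; destruct (Rcase_abs z); destruct (Rcase_abs y); lra.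
Qed.

Lemma mono_le (f f' : R -> R) (x1 x2 : R) : x1 <= x2 ->
  (forall c, x1 <= c <= x2 -> derivable_pt_lim f c (f' c)) ->
  (forall c, x1 < c < x2 -> 0 <= f' c) -> f x1 <= f x2.
Proof.
  intros H12 Hd Hp. destruct H12 as [H12|H12]; [|subst; lra].
  destruct (MVT_cor2 f f' x1 x2 H12 Hd) as [c [Hc1 Hc2]].
  specialize (Hp c Hc2). nra.
Qed.

Lemma mono_lt (f f' : R -> R) (x1 x2 : R) : x1 < x2 ->
  (forall c, x1 <= c <= x2 -> derivable_pt_lim f c (f' c)) ->
  (forall c, x1 < c < x2 -> 0 < f' c) -> f x1 < f x2.
Proof.
  intros H12 Hd Hp.
  destruct (MVT_cor2 f f' x1 x2 H12 Hd) as [c [Hc1 Hc2]].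
  specialize (Hp c Hc2). nra.
Qed.

Lemma const_lemma (f : R -> R) (lo hi : R) :
  (forall t, lo < t < hi -> derivable_pt_lim f t 0) ->
  forall x y, lo < x < hi -> lo < y < hi -> f x = f y.
Proof.
  intros Hd x y Hx Hy.
  assert (forall x y, lo < x < hi -> lo < y < hi -> x <= y -> f x <= f y /\ f y <= f x).
  { clear x y Hx Hy. intros x y Hx Hy Hxy. split.
    - apply (mono_le f (fun _ => 0)); auto. intros; apply Hd; lra. intros; lra.
    - apply Ropp_le_cancel. apply (mono_le (fun t => - f t) (fun _ => 0)); auto.
      intros c Hc. replace 0 with (-0) by ring. apply derivable_pt_lim_opp. apply Hd; lra.
      intros; lra. }
  destruct (Rle_dec x y).
  - destruct (H x y); auto; lra.
  - destruct (H y x); auto; lra.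
Qed.

Lemma fb_pos (b c : R) : 0 <= b -> 0 < c -> b*c^2 < 1 -> 0 < fb b c.
Proof.
  intros. unfold fb. apply Rdiv_lt_0_compat. nra.
  apply pow_lt. lra.
Qed.

Lemma Fb_0 (b : R) : Fb b 0 = 0.
Proof. unfold Fb. rewrite RInt_point. reflexivity. Qed.

Lemma Fb_lt (b x y : R) : 0 <= b -> 0 <= x -> x < y -> b*y^2 < 1 -> Fb b x < Fb b y.
Proof.
  intros Hb Hx Hxy Hy.
  apply (mono_lt (Fb b) (fb b)); auto.
  - intros c Hc. apply Fb_deriv; auto. assert (c^2 <= y^2) by nra. nra.
  - intros c Hc. apply fb_pos; auto. lra. assert (c^2 <= y^2) by nra. nra.
Qed.

Definition Bb (b u : R) : R := u^2 * (2 - b*u^2) / (4 * (1 - b*u^2)^2).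

Lemma Bb_deriv (b u : R) : b*u^2 < 1 -> derivable_pt_lim (Bb b) u (u / (1 - b*u^2)^3).
Proof.
  intros H. apply is_derive_Reals. unfold Bb.
  assert (0 < 1 - b*u^2) by lra.
  auto_derive.
  - apply Rgt_not_eq. replace (4 * ((1 + - (b * (u * (u * 1)))) * ((1 + - (b * (u * (u * 1)))) * 1)))
      with (4 * (1 - b*u^2)^2) by ring. apply Rmult_lt_0_compat. lra. apply pow_lt; lra.
  - field. lra.
Qed.

Lemma Fb_unbounded (b M : R) : 0 <= b < 1 ->
  exists v, 1 <= v /\ b*v^2 < 1 /\ M < Fb b v.
Proof.
  intros Hb.
  set (X := 4*(Rabs M + Rabs (Fb b 1) + Rabs (Bb b 1)) + /(1-b) + 1).
  assert (HX1 : / (1-b) + 1 <= X).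
  { unfold X. pose proof (Rabs_pos M). pose proof (Rabs_pos (Fb b 1)). pose proof (Rabs_pos (Bb b 1)). lra. }
  assert (Hinv : 1 <= /(1-b)).
  { rewrite <- Rinv_1. apply Rinv_le_contravar; lra. }
  set (w := X / (1 + b*X)).
  assert (H1bX : 0 < 1 + b*X) by nra.
  assert (Hw1 : 1 <= w).
  { unfold w. apply (Rmult_le_reg_r (1+b*X)); auto. unfold Rdiv. rewrite Rmult_assoc, Rinv_l; [|lra].
    assert (X*(1-b) >= (/(1-b)+1)*(1-b)) by nra.
    assert ((/(1-b)+1)*(1-b) = 1 + (1-b)) by (field; lra). nra. }
  assert (Hbw : 1 - b*w = /(1+b*X)).
  { unfold w. field. lra. }
  exists (sqrt w).
  assert (Hs : sqrt w ^2 = w) by (simpl; rewrite Rmult_1_r; apply sqrt_sqrt; lra).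
  assert (Hs1 : 1 <= sqrt w) by (rewrite <- sqrt_1; apply sqrt_le_1_alt; lra).
  assert (Hbw1 : b * sqrt w ^ 2 < 1).
  { rewrite Hs. assert (0 < /(1+b*X)) by (apply Rinv_0_lt_compat; lra). lra. }
  split; [auto|split; [auto|]].
  assert (Hcmp : Fb b 1 - Bb b 1 <= Fb b (sqrt w) - Bb b (sqrt w)).
  { apply (mono_le (fun u => Fb b u - Bb b u) (fun u => fb b u - u/(1-b*u^2)^3)); auto.
    - intros c Hc. assert (b*c^2 < 1) by (assert (c^2 <= sqrt w^2) by nra; nra).
      apply derivable_pt_lim_minus. apply Fb_deriv; lra. apply Bb_deriv; auto.
    - intros c Hc. assert (b*c^2 < 1) by (assert (c^2 <= sqrt w^2) by nra; nra).
      unfold fb. assert (0 < (1-b*c^2)^3) by (apply pow_lt; lra).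
      unfold Rminus at 1. rewrite <- Ropp_div. unfold Rdiv. rewrite <- Rmult_plus_distr_r.
      apply Rmult_le_pos. nra. left; apply Rinv_0_lt_compat; auto. }
  assert (HB : X/4 <= Bb b (sqrt w)).
  { unfold Bb. rewrite Hs. rewrite Hbw.
    assert (w*(2-b*w) >= w) by nra.
    assert (w / (4 * (/(1+b*X))^2) = X*(1+b*X)/4) by (unfold w; field; lra).
    assert (w*(2-b*w) / (4 * (/(1+b*X))^2) >= w / (4 * (/(1+b*X))^2)).
    { unfold Rdiv. apply Rmult_ge_compat_r; auto. left. apply Rinv_0_lt_compat.
      apply Rmult_lt_0_compat; [lra|]. apply pow_lt. apply Rinv_0_lt_compat; lra. }
    assert (X*(1+b*X)/4 >= X/4).
    { assert (0 <= b*X*X) by (assert (0 < X) by lra; nra). lra. }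
    lra. }
  pose proof (Rle_abs M). pose proof (Rle_abs (- Fb b 1)). rewrite Rabs_Ropp in H0.
  pose proof (Rle_abs (Bb b 1)). unfold X in HB.
  pose proof (Rinv_0_lt_compat (1-b)). lra.
Qed.

Lemma Fb_inj (b x y : R) : 0 <= b -> 0 <= x -> 0 <= y -> b*x^2 < 1 -> b*y^2 < 1 ->
  Fb b x = Fb b y -> x = y.
Proof.
  intros Hb Hx Hy Hbx Hby E.
  destruct (Rtotal_order x y) as [H|[H|H]]; auto.
  - pose proof (Fb_lt b x y Hb Hx H Hby). lra.
  - pose proof (Fb_lt b y x Hb Hy H Hbx). lra.
Qed.

Lemma Fb_le (b x y : R) : 0 <= b -> 0 <= x -> x <= y -> b*y^2 < 1 -> Fb b x <= Fb b y.
Proof.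
  intros Hb Hx Hxy Hy. destruct Hxy as [H|H]. left; apply Fb_lt; auto. subst; lra.
Qed.

Definition Vf (b K t : R) : R :=
  epsilon (inhabits 0) (fun v => 0 < v /\ b*v^2 < 1 /\ Fb b v = K*t + Fb b 1).

Lemma Fb1_pos (b : R) : 0 <= b < 1 -> 0 < Fb b 1.
Proof. intros Hb. rewrite <- (Fb_0 b). apply Fb_lt; lra. Qed.

Lemma Vf_spec (b K t : R) : 0 <= b < 1 -> 0 < K -> - Fb b 1 / K < t ->
  0 < Vf b K t /\ b * Vf b K t ^2 < 1 /\ Fb b (Vf b K t) = K*t + Fb b 1.
Proof.
  intros Hb HK Ht. unfold Vf. apply epsilon_spec.
  set (s := K*t + Fb b 1).
  assert (Hs : 0 < s).
  { unfold s. apply (Rmult_lt_compat_l K) in Ht; auto.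
    replace (K * (- Fb b 1 / K)) with (- Fb b 1) in Ht by (field; lra). lra. }
  destruct (Fb_unbounded b s Hb) as [v1 [Hv1 [Hbv1 Hv1s]]].
  destruct (IVT_interv (fun u => Fb b u - s) 0 v1) as [z [Hz1 Hz2]].
  - intros u Hu. apply derivable_continuous_pt.
    exists (fb b u - 0). apply derivable_pt_lim_minus. apply Fb_deriv. lra.
    assert (u^2 <= v1^2) by nra. nra. apply derivable_pt_lim_const.
  - lra.
  - rewrite Fb_0. lra.
  - lra.
  - exists z. split; [|split].
    + destruct Hz1 as [[H|H] _]; auto. subst. rewrite Fb_0 in Hz2. lra.
    + assert (z^2 <= v1^2) by nra. nra.
    + lra.
Qed.

Lemma Vf_0 (b K : R) : 0 <= b < 1 -> 0 < K -> Vf b K 0 = 1.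
Proof.
  intros Hb HK.
  assert (H : - Fb b 1 / K < 0).
  { pose proof (Fb1_pos b Hb). unfold Rdiv.
    apply Rmult_neg_pos. lra. apply Rinv_0_lt_compat; lra. }
  destruct (Vf_spec b K 0 Hb HK H) as [H1 [H2 H3]].
  apply (Fb_inj b); try lra.
Qed.

Lemma Vf_near (b K : R) : 0 <= b < 1 -> 0 < K ->
  forall e, 0 < e -> exists d, 0 < d /\ forall t, - Fb b 1 / K < t < - Fb b 1 / K + d -> Vf b K t < e.
Proof.
  intros Hb HK e He.
  set (v0 := Rmin e 1 / 2).
  assert (Hv0 : 0 < v0 /\ v0 < e /\ v0 <= 1/2).
  { unfold v0. pose proof (Rmin_l e 1). pose proof (Rmin_r e 1).
    assert (0 < Rmin e 1) by (apply Rmin_glb_lt; lra). lra. }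
  assert (Hbv0 : b * v0^2 < 1) by nra.
  exists (Fb b v0 / K). split.
  { apply Rdiv_lt_0_compat; auto. rewrite <- (Fb_0 b). apply Fb_lt; lra. }
  intros t Ht. destruct (Vf_spec b K t Hb HK (proj1 Ht)) as [H1 [H2 H3]].
  destruct (Rlt_dec (Vf b K t) v0) as [H|H]; [lra|].
  exfalso. apply Rnot_lt_le in H.
  assert (Fb b v0 <= Fb b (Vf b K t)) by (apply Fb_le; lra).
  destruct Ht as [_ Ht]. apply (Rmult_lt_compat_l K) in Ht; auto.
  replace (K * (- Fb b 1 / K + Fb b v0 / K)) with (- Fb b 1 + Fb b v0) in Ht by (field; lra).
  lra.
Qed.

Lemma Vf_cont (b K t0 : R) : 0 <= b < 1 -> 0 < K -> - Fb b 1 / K < t0 ->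
  forall e, 0 < e -> exists d, 0 < d /\ forall t, Rabs (t - t0) < d -> Rabs (Vf b K t - Vf b K t0) < e.
Proof.
  intros Hb HK Ht0 e He.
  destruct (Vf_spec b K t0 Hb HK Ht0) as [Hy0 [Hby0 HF0]].
  set (y0 := Vf b K t0) in *.
  destruct (ball_lemma b y0 (proj1 Hb) Hby0) as [r [Hr Hball]].
  set (e' := Rmin e (Rmin (y0/2) (r/2))).
  assert (He' : 0 < e' /\ e' <= e /\ e' <= y0/2 /\ e' <= r/2).
  { unfold e'. repeat split.
    - repeat apply Rmin_glb_lt; lra.
    - apply Rmin_l.
    - eapply Rle_trans. apply Rmin_r. apply Rmin_l.
    - eapply Rle_trans. apply Rmin_r. apply Rmin_r. }
  set (y1 := y0 - e'). set (y2 := y0 + e').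
  assert (Hb1 : b*y1^2 < 1).
  { apply (Hball y1). unfold y1. replace (y0 - e' - y0) with (- e') by ring. rewrite Rabs_Ropp, Rabs_pos_eq; lra. right; reflexivity. }
  assert (Hb2 : b*y2^2 < 1).
  { apply (Hball y2). unfold y2. replace (y0 + e' - y0) with e' by ring. rewrite Rabs_pos_eq; lra. right; reflexivity. }
  assert (F1 : Fb b y1 < Fb b y0) by (apply Fb_lt; try assumption; unfold y1; lra).
  assert (F2 : Fb b y0 < Fb b y2) by (apply Fb_lt; try assumption; unfold y2; lra).
  set (d := Rmin (t0 - - Fb b 1 / K) (Rmin ((Fb b y0 - Fb b y1)/K) ((Fb b y2 - Fb b y0)/K))).
  assert (Hd : 0 < d /\ d <= t0 - - Fb b 1 / K /\ K*d <= Fb b y0 - Fb b y1 /\ K*d <= Fb b y2 - Fb b y0).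
  { assert (0 < (Fb b y0 - Fb b y1)/K) by (apply Rdiv_lt_0_compat; lra).
    assert (0 < (Fb b y2 - Fb b y0)/K) by (apply Rdiv_lt_0_compat; lra).
    assert (d <= (Fb b y0 - Fb b y1)/K) by (eapply Rle_trans; [apply Rmin_r|apply Rmin_l]).
    assert (d <= (Fb b y2 - Fb b y0)/K) by (eapply Rle_trans; [apply Rmin_r|apply Rmin_r]).
    repeat split.
    - unfold d. repeat apply Rmin_glb_lt; lra.
    - apply Rmin_l.
    - apply (Rmult_le_compat_l K) in H1; [|lra]. replace (K * ((Fb b y0 - Fb b y1) / K)) with (Fb b y0 - Fb b y1) in H1 by (field; lra). lra.
    - apply (Rmult_le_compat_l K) in H2; [|lra]. replace (K * ((Fb b y2 - Fb b y0) / K)) with (Fb b y2 - Fb b y0) in H2 by (field; lra). lra. }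
  exists d. split. lra. intros t Ht.
  apply Rabs_def2 in Ht. destruct Ht as [Ht1 Ht2].
  destruct (Vf_spec b K t Hb HK) as [Hy [Hby HF]]. lra.
  assert (HFa : Fb b y1 < Fb b (Vf b K t)).
  { rewrite HF. fold y0 in HF0. assert (K*(t-t0) > - (K*d)) by nra. lra. }
  assert (HFb : Fb b (Vf b K t) < Fb b y2).
  { rewrite HF. assert (K*(t-t0) < K*d) by nra. lra. }
  assert (y1 < Vf b K t).
  { destruct (Rlt_dec y1 (Vf b K t)); auto. apply Rnot_lt_le in n.
    assert (Fb b (Vf b K t) <= Fb b y1) by (apply Fb_le; lra). lra. }
  assert (Vf b K t < y2).
  { destruct (Rlt_dec (Vf b K t) y2); auto. apply Rnot_lt_le in n.
    assert (Fb b y2 <= Fb b (Vf b K t)) by (apply Fb_le; try assumption; unfold y2; lra). lra. }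
  apply Rabs_def1; unfold y1, y2 in *; lra.
Qed.

Lemma inv_deriv (F V : R -> R) (t0 p K C r : R) : 0 < r -> K <> 0 -> p <> 0 ->
  (forall t, Rabs (t - t0) < r -> F (V t) = K*t + C) ->
  derivable_pt_lim F (V t0) p ->
  (forall e, 0 < e -> exists d, 0 < d /\ forall t, Rabs (t - t0) < d -> Rabs (V t - V t0) < e) ->
  derivable_pt_lim V t0 (K/p).
Proof.
  intros Hr HK Hp HFV HF Hc eps Heps.
  assert (HpA : 0 < Rabs p) by (apply Rabs_pos_lt; auto).
  assert (HKA : 0 < Rabs K) by (apply Rabs_pos_lt; auto).
  assert (Hp2 : p^2 = Rabs p * Rabs p) by (rewrite <- Rabs_mult; simpl; rewrite Rmult_1_r; rewrite Rabs_pos_eq; [ring|]; apply Rle_0_sqr).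
  set (eta := Rmin (Rabs p / 2) (eps * p^2 / (2 * Rabs K))).
  assert (Heta : 0 < eta).
  { unfold eta. apply Rmin_glb_lt. lra. apply Rdiv_lt_0_compat. rewrite Hp2. apply Rmult_lt_0_compat; auto. apply Rmult_lt_0_compat; auto. lra. }
  assert (Heta1 : eta <= Rabs p / 2) by apply Rmin_l.
  assert (Heta2 : Rabs K * eta <= eps * p^2 / 2).
  { assert (eta <= eps * p ^ 2 / (2 * Rabs K)) by apply Rmin_r.
    apply (Rmult_le_compat_l (Rabs K)) in H; [|lra].
    replace (Rabs K * (eps * p ^ 2 / (2 * Rabs K))) with (eps * p^2/2) in H by (field; lra). exact H. }
  destruct (HF eta Heta) as [d1 Hd1].
  destruct (Hc d1 (cond_pos d1)) as [d2 [Hd2 Hc2]].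
  assert (Hd : 0 < Rmin d2 r) by (apply Rmin_glb_lt; auto).
  exists (mkposreal _ Hd). intros h Hh0 Hh. simpl in Hh.
  assert (Hh2 : Rabs h < d2) by (eapply Rlt_le_trans; [exact Hh|apply Rmin_l]).
  assert (Hhr : Rabs h < r) by (eapply Rlt_le_trans; [exact Hh|apply Rmin_r]).
  set (h' := V (t0 + h) - V t0).
  assert (E1 : F (V (t0+h)) = K*(t0+h) + C) by (apply HFV; replace (t0+h-t0) with h by ring; auto).
  assert (E0 : F (V t0) = K*t0 + C) by (apply HFV; replace (t0-t0) with 0 by ring; rewrite Rabs_R0; auto).
  assert (Hh' : Rabs h' < d1) by (apply Hc2; replace (t0+h-t0) with h by ring; auto).
  assert (Hh'0 : h' <> 0).
  { intro E. unfold h' in E. assert (V (t0+h) = V t0) by lra. rewrite H in E1.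
    apply Hh0. apply (Rmult_eq_reg_l K); auto. lra. }
  specialize (Hd1 h' Hh'0 Hh').
  replace (V t0 + h') with (V (t0+h)) in Hd1 by (unfold h'; ring).
  rewrite E1, E0 in Hd1.
  replace (K * (t0 + h) + C - (K * t0 + C)) with (K*h) in Hd1 by ring.
  set (q := K*h/h') in *.
  assert (Hq : Rabs q >= Rabs p / 2).
  { pose proof (Rabs_triang (q - p) p). replace (q - p + p) with q in H by ring.
    pose proof (Rabs_triang (p - q) q). replace (p - q + q) with p in H0 by ring.
    rewrite <- Rabs_Ropp in Hd1. replace (- (q - p)) with (p - q) in Hd1 by ring. lra. }
  assert (Hq0 : q <> 0) by (intro E; rewrite E, Rabs_R0 in Hq; lra).
  replace (h' / h - K / p) with (K * (p - q) / (q * p)).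
  2:{ unfold q. fold h'. field. repeat split; auto. }
  unfold Rdiv. repeat rewrite Rabs_mult. rewrite Rabs_inv. repeat rewrite Rabs_mult.
  rewrite <- Rabs_Ropp in Hd1. replace (- (q - p)) with (p - q) in Hd1 by ring.
  assert (HB : Rabs p * Rabs p / 2 <= Rabs q * Rabs p) by nra.
  assert (HA : Rabs K * Rabs (p - q) < eps * (Rabs p * Rabs p) / 2).
  { rewrite <- Hp2. apply Rmult_lt_compat_l with (r := Rabs K) in Hd1; auto. lra. }
  apply (Rmult_lt_reg_r (Rabs q * Rabs p)). nra.
  rewrite Rmult_assoc, Rinv_l by (apply Rgt_not_eq; nra). nra.
Qed.

Lemma Vf_deriv (b K t0 : R) : 0 <= b < 1 -> 0 < K -> - Fb b 1 / K < t0 ->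
  derivable_pt_lim (Vf b K) t0 (K * (1 - b * Vf b K t0 ^2)^3 / Vf b K t0 ^2).
Proof.
  intros Hb HK Ht0.
  destruct (Vf_spec b K t0 Hb HK Ht0) as [Hy0 [Hby0 HF0]].
  assert (Hp : 0 < fb b (Vf b K t0)) by (apply fb_pos; lra).
  replace (K * (1 - b * Vf b K t0 ^2)^3 / Vf b K t0 ^2) with (K / fb b (Vf b K t0)).
  2:{ unfold fb. field. repeat split; try lra; apply Rgt_not_eq; apply pow_lt; lra. }
  apply (inv_deriv (Fb b) (Vf b K) t0 _ K (Fb b 1) (t0 - - Fb b 1 / K)); try lra.
  - intros t Ht. apply Rabs_def2 in Ht. apply Vf_spec; auto. lra.
  - apply Fb_deriv; lra.
  - apply Vf_cont; auto.
Qed.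

Lemma core_unique (b K lo hi : R) (v : R -> R) : 0 <= b < 1 -> 0 < K -> lo < 0 < hi ->
  (forall t, lo < t < hi -> 0 < v t /\ b * v t ^2 < 1 /\
      derivable_pt_lim v t (K * (1 - b * v t ^2)^3 / v t ^2)) ->
  v 0 = 1 ->
  - Fb b 1 / K <= lo /\ forall t, lo < t < hi -> v t = Vf b K t.
Proof.
  intros Hb HK Hlh Hv Hv0.
  assert (Hg : forall t, lo < t < hi -> Fb b (v t) - K*t = Fb b (v 0) - K*0).
  { intros t0 Ht0. apply (const_lemma (fun t => Fb b (v t) - K*t) lo hi); [|exact Ht0|lra].
    intros t Ht. destruct (Hv t Ht) as [H1 [H2 H3]].
    replace 0 with (fb b (v t) * (K * (1 - b * v t ^ 2) ^ 3 / v t ^ 2) - K * 1).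
    2:{ unfold fb. field. repeat split; try lra; apply Rgt_not_eq; apply pow_lt; lra. }
    apply derivable_pt_lim_minus.
    - apply (derivable_pt_lim_comp v (Fb b)); auto. apply Fb_deriv; lra.
    - apply derivable_pt_lim_scal. apply derivable_pt_lim_id. }
  rewrite Hv0 in Hg.
  assert (HT : forall t, lo < t < hi -> - Fb b 1 / K < t).
  { intros t Ht. specialize (Hg t Ht). destruct (Hv t Ht) as [H1 [H2 _]].
    assert (0 < Fb b (v t)) by (rewrite <- (Fb_0 b); apply Fb_lt; lra).
    apply (Rmult_lt_reg_l K); auto. replace (K * (- Fb b 1 / K)) with (- Fb b 1) by (field; lra). lra. }
  split.
  - destruct (Rle_dec (- Fb b 1 / K) lo) as [H|H]; auto. exfalso.
    apply Rnot_le_lt in H.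
    assert (- Fb b 1 / K < 0).
    { pose proof (Fb1_pos b Hb). unfold Rdiv. apply Rmult_neg_pos. lra. apply Rinv_0_lt_compat; lra. }
    specialize (HT (- Fb b 1 / K)). lra.
  - intros t Ht. destruct (Vf_spec b K t Hb HK (HT t Ht)) as [H1 [H2 H3]].
    destruct (Hv t Ht) as [H4 [H5 _]]. specialize (Hg t Ht).
    apply (Fb_inj b); try lra.
Qed.

Ltac ex_der := repeat split; auto; try (eexists; eassumption).

Lemma abs_cases (a : R) : (Rabs a < 1 <-> a^2 < 1) /\ (Rabs a = 1 <-> a^2 = 1) /\ (1 < Rabs a <-> 1 < a^2).
Proof.
  unfold Rabs; destruct (Rcase_abs a); repeat split; intro H; try nra.
Qed.

Lemma deriv_inv_V (V : R -> R) (t d : R) : derivable_pt_lim V t d -> V t <> 0 ->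
  derivable_pt_lim (fun s => / V s) t (- d / V t ^2).
Proof.
  intros H H0. apply is_derive_Reals. apply is_derive_Reals in H.
  auto_derive. ex_der.
  replace (Derive (fun x => V x) t) with d by (symmetry; apply is_derive_unique; auto).
  field; auto.
Qed.

Lemma deriv_phi_V (V : R -> R) (t d b : R) : derivable_pt_lim V t d -> 1 - b * V t ^2 <> 0 ->
  derivable_pt_lim (fun s => (1-b) * V s / (1 - b * V s ^2)) t ((1-b)*(1 + b * V t^2)/(1 - b*V t^2)^2 * d).
Proof.
  intros H H0. apply is_derive_Reals. apply is_derive_Reals in H.
  auto_derive. ex_der.
  replace (Derive (fun x => V x) t) with d by (symmetry; apply is_derive_unique; auto).
  field. intro E; apply H0; rewrite <- E; ring.
Qed.

Lemma conserv (a lo hi : R) (h1 h3 : R -> R) : lo < 0 < hi ->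
  sol_on a (fun t => lo < t < hi) h1 h3 ->
  forall t, lo < t < hi -> h1 t * (a^2 - h3 t ^2) = (a^2 - 1) * h3 t.
Proof.
  intros Hlh [H10 [H30 Hs]] t Ht.
  assert (HG : forall s, lo < s < hi -> h1 s * (a^2 / h3 s - h3 s) = h1 0 * (a^2 / h3 0 - h3 0)).
  { intros s Hs'. apply (const_lemma (fun s => h1 s * (a^2 / h3 s - h3 s)) lo hi); [|exact Hs'|lra].
    intros u Hu. destruct (Hs u Hu) as [P1 [P3 [D1 D3]]].
    apply is_derive_Reals in D1. apply is_derive_Reals in D3.
    apply is_derive_Reals. auto_derive. ex_der. lra.
    replace (Derive (fun x => h1 x) u) with ((a ^ 2 + h3 u ^ 2) / (h1 u * h3 u)) by (symmetry; apply is_derive_unique; auto).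
    replace (Derive (fun x => h3 x) u) with ((a ^ 2 - h3 u ^ 2) / (h1 u ^2)) by (symmetry; apply is_derive_unique; auto).
    field. lra. }
  specialize (HG t Ht). rewrite H10, H30 in HG. destruct (Hs t Ht) as [P1 [P3 _]].
  replace (1 * (a ^ 2 / 1 - 1)) with (a^2 - 1) in HG by field.
  rewrite <- HG. field. lra.
Qed.

Lemma Fb0_1 : Fb 0 1 = 1/3.
Proof.
  assert (H : Fb 0 1 - 1^3/3 = Fb 0 0 - 0^3/3).
  { apply (const_lemma (fun v => Fb 0 v - v^3/3) (-1) 2); try lra.
    intros t Ht. replace 0 with (fb 0 t - t^2) at 1.
    2:{ unfold fb. field. }
    apply derivable_pt_lim_minus. apply Fb_deriv; lra.
    apply is_derive_Reals. auto_derive. auto. field. }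
  rewrite Fb_0 in H. lra.
Qed.

Definition good (a T : R) : Prop :=
      T < 0 /\
      exists g1 g3 : R -> R,
        sol_on a (fun t => T < t) g1 g3 /\
        (forall (lo hi : R) (h1 h3 : R -> R),
            lo < 0 < hi ->
            sol_on a (fun t => lo < t < hi) h1 h3 ->
            T <= lo /\
            forall t, lo < t < hi -> h1 t = g1 t /\ h3 t = g3 t) /\
        right_lim g1 T 0 /\
        (Rabs a < 1 -> right_lim_infty g3 T) /\
        (Rabs a = 1 -> right_lim g3 T 1) /\
        (1 < Rabs a -> right_lim g3 T 0).

Lemma T_neg (b K : R) : 0 <= b < 1 -> 0 < K -> - Fb b 1 / K < 0.
Proof.
  intros Hb HK. pose proof (Fb1_pos b Hb). unfold Rdiv. apply Rmult_neg_pos. lra. apply Rinv_0_lt_compat; lra.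
Qed.

Lemma g1_lim (b K : R) : 0 <= b < 1 -> 0 < K ->
  right_lim (fun t => (1-b) * Vf b K t / (1 - b * Vf b K t ^2)) (- Fb b 1 / K) 0.
Proof.
  intros Hb HK eps Heps.
  destruct (Vf_near b K Hb HK (Rmin eps 1)) as [d [Hd Hn]]. apply Rmin_glb_lt; lra.
  exists d. split; auto. intros t Ht.
  specialize (Hn t Ht). destruct (Vf_spec b K t Hb HK (proj1 Ht)) as [H1 [H2 _]].
  pose proof (Rmin_l eps 1). pose proof (Rmin_r eps 1).
  set (V := Vf b K t) in *.
  assert (0 < 1 - b*V^2) by lra.
  assert (0 <= (1-b)*V/(1-b*V^2) <= V).
  { split. apply Rdiv_le_0_compat; nra.
    apply (Rmult_le_reg_r (1 - b*V^2)); auto. unfold Rdiv. rewrite Rmult_assoc, Rinv_l by lra. assert (V*V <= 1) by nra. assert (b*(V*(V*V)) <= b*V) by (apply Rmult_le_compat_l; nra). nra. }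
  rewrite Rminus_0_r, Rabs_pos_eq; lra.
Qed.

Lemma dpl_val (f : R -> R) (x l1 l2 : R) : derivable_pt_lim f x l1 -> l1 = l2 -> derivable_pt_lim f x l2.
Proof. intros H E; subst; auto. Qed.

Lemma case_lt (a : R) : a^2 < 1 -> good a (- Fb (a^2) 1 / (/ (1 - a^2)^2)).
Proof.
  intros Ha.
  assert (Hb : 0 <= a^2 < 1) by (split; nra).
  assert (HK : 0 < / (1 - a^2)^2) by (apply Rinv_0_lt_compat; apply pow_lt; lra).
  unfold good, sol_on.
  remember (a^2) as b eqn:Eb. remember (/ (1 - b)^2) as K eqn:EK.
  split. apply T_neg; auto.
  exists (fun t => (1-b) * Vf b K t / (1 - b * Vf b K t ^2)), (fun t => / Vf b K t).
  split; [|split; [|split; [|split; [|split]]]].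
  - split; [|split].
    + rewrite Vf_0; auto. field. lra.
    + rewrite Vf_0; auto. apply Rinv_1.
    + intros t Ht. destruct (Vf_spec b K t Hb HK Ht) as [H1 [H2 _]].
      pose proof (Vf_deriv b K t Hb HK Ht) as HD.
      assert (0 < 1 - b*Vf b K t^2) by lra.
      split; [|split; [|split]].
      * apply Rdiv_lt_0_compat; nra.
      * apply Rinv_0_lt_compat; lra.
      * eapply dpl_val. apply deriv_phi_V. exact HD. lra.
        set (V := Vf b K t) in *. rewrite EK. field. repeat split; lra.
      * eapply dpl_val. apply deriv_inv_V. exact HD. lra.
        set (V := Vf b K t) in *. rewrite EK. field. repeat split; lra.
  - intros lo hi h1 h3 Hlh Hsol.
    assert (Hc : forall t, lo < t < hi -> h1 t * (b - h3 t ^2) = (b - 1) * h3 t).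
    { rewrite Eb in Hsol |- *. apply (conserv a lo hi h1 h3 Hlh Hsol). }
    destruct Hsol as [H10 [H30 Hs]].
    assert (Hh : forall t, lo < t < hi -> b - h3 t ^2 < 0 /\ h1 t = (b - 1) * h3 t / (b - h3 t^2)).
    { intros t Ht. destruct (Hs t Ht) as [P1 [P3 _]]. specialize (Hc t Ht).
      assert (b - h3 t ^2 < 0) by nra. split; auto. rewrite <- Hc. field. lra. }
    destruct (core_unique b K lo hi (fun t => / h3 t) Hb HK Hlh) as [HT Heq].
    + intros t Ht. destruct (Hs t Ht) as [P1 [P3 [D1 D3]]]. destruct (Hh t Ht) as [Q1 Q2].
      split; [|split].
      * apply Rinv_0_lt_compat; lra.
      * replace (b * (/ h3 t)^2) with (b / h3 t ^2) by (field; lra).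
        apply (Rmult_lt_reg_r (h3 t ^2)). nra. unfold Rdiv. rewrite Rmult_assoc, Rinv_l by nra. nra.
      * eapply dpl_val. apply deriv_inv_V. exact D3. lra.
        rewrite Q2. rewrite EK. field. repeat split; lra.
    + rewrite H30. apply Rinv_1.
    + split; auto. intros t Ht. specialize (Heq t Ht).
      destruct (Hs t Ht) as [P1 [P3 _]]. destruct (Hh t Ht) as [Q1 Q2].
      assert (E3 : h3 t = / Vf b K t).
      { rewrite <- Heq. field. lra. }
      split; auto.
      destruct (Vf_spec b K t Hb HK ltac:(lra)) as [V1 [V2 _]].
      rewrite Q2, E3. field. repeat split; lra.
  - apply g1_lim; auto.
  - intros _ M.
    destruct (Vf_near b K Hb HK (/ (Rabs M + 1))) as [d [Hd Hn]].
    { apply Rinv_0_lt_compat. pose proof (Rabs_pos M). lra. }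
    exists d. split; auto. intros t Ht. specialize (Hn t Ht).
    destruct (Vf_spec b K t Hb HK (proj1 Ht)) as [H1 _].
    assert (Rabs M + 1 < / Vf b K t).
    { rewrite <- (Rinv_inv (Rabs M + 1)). apply Rinv_lt_contravar; auto.
      apply Rmult_lt_0_compat; auto. apply Rinv_0_lt_compat. pose proof (Rabs_pos M). lra. }
    pose proof (Rle_abs M). lra.
  - intros HA. exfalso. apply (proj1 (proj1 (proj2 (abs_cases a)))) in HA. lra.
  - intros HA. exfalso. apply (proj1 (proj2 (proj2 (abs_cases a)))) in HA. lra.
Qed.

Lemma case_gt (a : R) : 1 < a^2 -> good a (- Fb (/ a^2) 1 / (a^6 / (a^2 - 1)^2)).
Proof.
  intros Ha.
  replace (a^6) with ((a^2)^3) by ring.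
  unfold good, sol_on.
  remember (a^2) as A eqn:EA.
  assert (Hb : 0 <= / A < 1).
  { split. left; apply Rinv_0_lt_compat; lra. rewrite <- Rinv_1. apply Rinv_lt_contravar; lra. }
  assert (HK : 0 < A^3 / (A - 1)^2) by (apply Rdiv_lt_0_compat; [apply pow_lt; lra| apply pow_lt; lra]).
  remember (/ A) as b eqn:Eb. remember (A^3 / (A - 1)^2) as K eqn:EK.
  assert (HbA : b * A = 1) by (subst b; field; lra).
  split. apply T_neg; auto.
  exists (fun t => (1-b) * Vf b K t / (1 - b * Vf b K t ^2)), (fun t => Vf b K t).
  split; [|split; [|split; [|split; [|split]]]].
  - split; [|split].
    + rewrite Vf_0; auto. field. lra.
    + rewrite Vf_0; auto.
    + intros t Ht. destruct (Vf_spec b K t Hb HK Ht) as [H1 [H2 _]].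
      pose proof (Vf_deriv b K t Hb HK Ht) as HD.
      assert (0 < 1 - b*Vf b K t^2) by lra.
      split; [|split; [|split]].
      * apply Rdiv_lt_0_compat; nra.
      * lra.
      * eapply dpl_val. apply deriv_phi_V. exact HD. lra.
        set (V := Vf b K t) in *.
        assert (V^2 < A) by (assert (A*(b*V^2) < A*1) by (apply Rmult_lt_compat_l; lra); nra).
        rewrite EK, Eb. field. repeat split; lra.
      * eapply dpl_val. exact HD.
        set (V := Vf b K t) in *.
        assert (V^2 < A) by (assert (A*(b*V^2) < A*1) by (apply Rmult_lt_compat_l; lra); nra).
        rewrite EK, Eb. field. repeat split; lra.
  - intros lo hi h1 h3 Hlh Hsol.
    assert (Hc : forall t, lo < t < hi -> h1 t * (A - h3 t ^2) = (A - 1) * h3 t).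
    { rewrite EA in Hsol |- *. apply (conserv a lo hi h1 h3 Hlh Hsol). }
    destruct Hsol as [H10 [H30 Hs]].
    assert (Hh : forall t, lo < t < hi -> 0 < A - h3 t ^2 /\ h1 t = (A - 1) * h3 t / (A - h3 t^2)).
    { intros t Ht. destruct (Hs t Ht) as [P1 [P3 _]]. specialize (Hc t Ht).
      assert (0 < A - h3 t ^2) by nra. split; auto. rewrite <- Hc. field. lra. }
    destruct (core_unique b K lo hi h3 Hb HK Hlh) as [HT Heq].
    + intros t Ht. destruct (Hs t Ht) as [P1 [P3 [D1 D3]]]. destruct (Hh t Ht) as [Q1 Q2].
      split; [|split].
      * lra.
      * assert (b * h3 t ^2 < b * A) by (apply Rmult_lt_compat_l; [subst b; apply Rinv_0_lt_compat|]; lra). lra.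
      * eapply dpl_val. exact D3.
        rewrite Q2. rewrite EK, Eb. field. repeat split; lra.
    + auto.
    + split; auto. intros t Ht. specialize (Heq t Ht).
      destruct (Hs t Ht) as [P1 [P3 _]]. destruct (Hh t Ht) as [Q1 Q2].
      split; auto.
      destruct (Vf_spec b K t Hb HK ltac:(lra)) as [V1 [V2 _]].
      rewrite Q2, Heq. set (V := Vf b K t) in *.
      assert (V^2 < A) by (assert (A*(b*V^2) < A*1) by (apply Rmult_lt_compat_l; lra); nra).
      rewrite Eb. field. repeat split; lra.
  - apply g1_lim; auto.
  - intros HA. exfalso. apply (proj1 (abs_cases a)) in HA. lra.
  - intros HA. exfalso. apply (proj1 (proj1 (proj2 (abs_cases a)))) in HA. lra.
  - intros _ eps Heps.
    destruct (Vf_near b K Hb HK eps Heps) as [d [Hd Hn]].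
    exists d. split; auto. intros t Ht. specialize (Hn t Ht).
    destruct (Vf_spec b K t Hb HK (proj1 Ht)) as [H1 _].
    rewrite Rminus_0_r, Rabs_pos_eq; lra.
Qed.

Lemma case_eq (a : R) : a^2 = 1 -> good a (- / 4).
Proof.
  intros Ha. unfold good, sol_on. rewrite Ha.
  split. lra.
  exists (fun t => sqrt (1 + 4*t)), (fun _ => 1).
  split; [|split; [|split; [|split; [|split]]]].
  - split; [|split].
    + replace (1 + 4*0) with 1 by ring. apply sqrt_1.
    + reflexivity.
    + intros t Ht. assert (Hp : 0 < 1 + 4*t) by lra.
      pose proof (sqrt_lt_R0 _ Hp) as Hs.
      split; [|split; [|split]].
      * auto.
      * lra.
      * eapply dpl_val.
        apply (derivable_pt_lim_comp (fun t => 1 + 4*t) sqrt).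
        apply is_derive_Reals. auto_derive. auto. reflexivity.
        apply derivable_pt_lim_sqrt. auto.
        field. lra.
      * eapply dpl_val. apply derivable_pt_lim_const. field. lra.
  - intros lo hi h1 h3 Hlh Hsol.
    assert (Hc : forall t, lo < t < hi -> h1 t * (1 - h3 t ^2) = (1 - 1) * h3 t).
    { assert (Hsol' : sol_on a (fun t => lo < t < hi) h1 h3) by (unfold sol_on; rewrite Ha; exact Hsol).
      intros t Ht. pose proof (conserv a lo hi h1 h3 Hlh Hsol' t Ht) as E. rewrite Ha in E. exact E. }
    destruct Hsol as [H10 [H30 Hs]].
    assert (H3 : forall t, lo < t < hi -> h3 t = 1).
    { intros t Ht. destruct (Hs t Ht) as [P1 [P3 _]]. specialize (Hc t Ht).
      assert (1 - h3 t ^2 = 0).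
      { apply (Rmult_eq_reg_l (h1 t)); lra. }
      nra. }
    assert (HG : forall t, lo < t < hi -> h1 t ^2 - 4*t = h1 0 ^2 - 4*0).
    { intros t0 Ht0. apply (const_lemma (fun t => h1 t ^2 - 4*t) lo hi); [|exact Ht0|lra].
      intros t Ht. destruct (Hs t Ht) as [P1 [P3 [D1 _]]]. rewrite (H3 t Ht) in D1.
      apply is_derive_Reals in D1. apply is_derive_Reals. auto_derive. ex_der.
      replace (Derive (fun x => h1 x) t) with ((1 + 1^2) / (h1 t * 1)) by (symmetry; apply is_derive_unique; auto).
      field. lra. }
    rewrite H10 in HG.
    assert (HT : forall t, lo < t < hi -> - / 4 < t).
    { intros t Ht. specialize (HG t Ht). destruct (Hs t Ht) as [P1 _].
      assert (0 < h1 t ^2) by nra. lra. }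
    split.
    + destruct (Rle_dec (- / 4) lo) as [H|H]; auto. exfalso.
      apply Rnot_le_lt in H. specialize (HT (- / 4)). lra.
    + intros t Ht. split; [|apply H3; auto].
      specialize (HG t Ht). destruct (Hs t Ht) as [P1 _].
      replace (1 + 4*t) with (h1 t ^2) by lra. rewrite sqrt_pow2; lra.
  - intros eps Heps. exists (eps^2/4). split. nra.
    intros t Ht. rewrite Rminus_0_r.
    assert (0 < 1 + 4*t) by lra.
    rewrite Rabs_pos_eq by (apply sqrt_pos).
    rewrite <- (sqrt_pow2 eps) by lra. apply sqrt_lt_1_alt. lra.
  - intros HA. exfalso. apply (proj1 (abs_cases a)) in HA. lra.
  - intros _ eps Heps. exists 1. split. lra. intros t Ht. rewrite Rminus_eq_0, Rabs_R0. auto.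
  - intros HA. exfalso. apply (proj1 (proj2 (proj2 (abs_cases a)))) in HA. lra.
Qed.

Definition Tmin (a : R) : R :=
  if Req_dec_T (a^2) 1 then - / 4
  else if Rlt_dec (a^2) 1 then - Fb (a^2) 1 / (/ (1 - a^2)^2)
  else - Fb (/ a^2) 1 / (a^6 / (a^2 - 1)^2).

Theorem mainTheorem9 :
  exists Tmin : R -> R,
    (forall a, Tmin (- a) = Tmin a) /\
    Tmin 0 = - (1 / 3) /\
    forall a : R,
      Tmin a < 0 /\
      exists g1 g3 : R -> R,
        (* a solution on (Tmin a, +oo) *)
        sol_on a (fun t => Tmin a < t) g1 g3 /\
        (* maximality: every solution on an open interval around 0 lives
           inside (Tmin a, +oo) and coincides with (g1,g3) there *)
        (forall (lo hi : R) (h1 h3 : R -> R),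
            lo < 0 < hi ->
            sol_on a (fun t => lo < t < hi) h1 h3 ->
            Tmin a <= lo /\
            forall t, lo < t < hi -> h1 t = g1 t /\ h3 t = g3 t) /\
        right_lim g1 (Tmin a) 0 /\
        (Rabs a < 1 -> right_lim_infty g3 (Tmin a)) /\
        (Rabs a = 1 -> right_lim g3 (Tmin a) 1) /\
        (1 < Rabs a -> right_lim g3 (Tmin a) 0).
Proof.
  exists Tmin. split; [|split].
  - intros a. unfold Tmin. replace ((-a)^2) with (a^2) by ring. replace ((-a)^6) with (a^6) by ring. reflexivity.
  - unfold Tmin. replace (0^2) with 0 by ring.
    destruct (Req_dec_T 0 1); [lra|]. destruct (Rlt_dec 0 1); [|lra].
    rewrite Fb0_1. field.
  - intros a. fold (good a (Tmin a)). unfold Tmin.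
    destruct (Req_dec_T (a^2) 1) as [E|E].
    + apply case_eq; auto.
    + destruct (Rlt_dec (a^2) 1) as [L|L].
      * apply case_lt; auto.
      * apply case_gt. destruct (Rtotal_order (a^2) 1) as [?|[?|?]]; auto; contradiction.
Qed.
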